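(* Consider the two-unicast wireline network (''butterfly network 1'') with nodes $\mathsf{S}_1,\mathsf{S}_2,\mathsf{M}_1,\mathsf{M}_2,\mathsf{D}_1,\mathsf{D}_2$ and seven directed edges: edge 1 from $\mathsf{S}_1$ to $\mathsf{M}_1$, edge 2 from $\mathsf{S}_2$ to $\mathsf{M}_1$, edge 3 from $\mathsf{M}_1$ to $\mathsf{M}_2$, edge 4 from $\mathsf{S}_1$ to $\mathsf{D}_2$, edge 5 from $\mathsf{S}_2$ to $\mathsf{D}_1$, edge 6 from $\mathsf{M}_2$ to $\mathsf{D}_2$, edge 7 from $\mathsf{M}_2$ to $\mathsf{D}_1$, with arbitrary capacities $\mathsf{C}_1,\dots,\mathsf{C}_7\ge 0$. Then secure communication is not possible: the only securely achievable rate pair is $(R_1,R_2)=(0,0)$.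
   Context: Network model: a directed acyclic graph; each edge $e$ is a noiseless orthogonal channel of capacity $\mathsf{C}_e$ carrying symbols over $\mathbb{F}_q$; over $n$ channel uses, edge $e$ carries $X_e^n$, received as $Y_e^n=X_e^n$. Source $\mathsf{S}_i$ has message $W_i$ (uniform, $q$-ary entropy $nR_i$, $W_1,W_2$ independent) to be decoded at $\mathsf{D}_i$, and an independent, unlimited private source of randomness $\Theta_i$. A rate pair is securely achievable if for some block length $n$ there are encoding functions—an edge leaving $\mathsf{S}_i$ carries a function of $(W_i,\Theta_i)$, any other edge a function of the symbols received on the incoming edges of its tail—and decoders at $\mathsf{D}_j$ (functions of the symbols on the incoming edges of $\mathsf{D}_j$) recovering $W_j$ with vanishing error probability, and moreover a passive eavesdropper wiretapping any single edge (which one is unknown) learns essentially nothing: for every edge $e$, $I(W_1,W_2;Z_e^n)<\epsilon_n$ with $\epsilon_n\to 0$, where $Z_e^n=X_e^n$ is the eavesdropper's observation on edge $e$ (strong secrecy). *)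

(* Defs.v *)
From HB Require Import structures.
From mathcomp Require Import all_boot all_order all_algebra.
From mathcomp Require Import all_classical all_reals all_analysis.
Set Implicit Arguments. Unset Strict Implicit. Unset Printing Implicit Defensive.
Import Order.TTheory GRing.Theory Num.Theory.
Import numFieldNormedType.Exports.
Local Open Scope classical_set_scope.
Local Open Scope ring_scope.

Section Info.
Variable R : realType.

Definition Prb (Om : finType) (P : Om -> R) (A : pred Om) : R :=
  \sum_(w | A w) P w.

Definition mutinf (Om : finType) (P : Om -> R) (A B : finType)
  (f : Om -> A) (g : Om -> B) : R :=
  \sum_(a : A) \sum_(b : B)
    let pab := Prb P (fun w => (f w == a) && (g w == b)) in
    if pab == 0 then 0
    else pab * ln (pab / (Prb P (fun w => f w == a) * Prb P (fun w => g w == b))).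
End Info.

(* Butterfly network 1.  Edges:
   1: S1->M1, 2: S2->M1, 3: M1->M2, 4: S1->D2, 5: S2->D1, 6: M2->D2, 7: M2->D1.
   [k e] = number of F-symbols carried by edge e over the block. *)
Record scheme (R : realType) (F : finFieldType) (k : nat -> nat) := Scheme {
  Wset1 : finType;
  Wset2 : finType;
  Th1 : finType;
  Th2 : finType;
  p1 : Th1 -> R;
  p2 : Th2 -> R;
  p1_ge0 : forall t, 0 <= p1 t;
  p1_sum : \sum_t p1 t = 1;
  p2_ge0 : forall t, 0 <= p2 t;
  p2_sum : \sum_t p2 t = 1;
  enc1 : Wset1 -> Th1 -> (k 1%N).-tuple F;
  enc4 : Wset1 -> Th1 -> (k 4%N).-tuple F;
  enc2 : Wset2 -> Th2 -> (k 2%N).-tuple F;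
  enc5 : Wset2 -> Th2 -> (k 5%N).-tuple F;
  enc3 : (k 1%N).-tuple F -> (k 2%N).-tuple F -> (k 3%N).-tuple F;
  enc6 : (k 3%N).-tuple F -> (k 6%N).-tuple F;
  enc7 : (k 3%N).-tuple F -> (k 7%N).-tuple F;
  dec1 : (k 5%N).-tuple F -> (k 7%N).-tuple F -> Wset1;
  dec2 : (k 4%N).-tuple F -> (k 6%N).-tuple F -> Wset2
}.

Section SchemeDefs.
Variables (R : realType) (F : finFieldType) (k : nat -> nat) (s : scheme R F k).

Definition Omega : finType := (Wset1 s * Wset2 s * Th1 s * Th2 s)%type.

Definition PO (w : Omega) : R :=
  (#|Wset1 s|%:R)^-1 * (#|Wset2 s|%:R)^-1 * p1 w.1.2 * p2 w.2.

Definition rvW1 (w : Omega) : Wset1 s := w.1.1.1.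
Definition rvW2 (w : Omega) : Wset2 s := w.1.1.2.
Definition rvW12 (w : Omega) : (Wset1 s * Wset2 s)%type := w.1.1.
Definition rvX1 (w : Omega) := enc1 (rvW1 w) w.1.2.
Definition rvX4 (w : Omega) := enc4 (rvW1 w) w.1.2.
Definition rvX2 (w : Omega) := enc2 (rvW2 w) w.2.
Definition rvX5 (w : Omega) := enc5 (rvW2 w) w.2.
Definition rvX3 (w : Omega) := @enc3 _ _ _ s (rvX1 w) (rvX2 w).
Definition rvX6 (w : Omega) := @enc6 _ _ _ s (rvX3 w).
Definition rvX7 (w : Omega) := @enc7 _ _ _ s (rvX3 w).

Definition Perr1 : R := Prb PO (fun w => @dec1 _ _ _ s (rvX5 w) (rvX7 w) != rvW1 w).
Definition Perr2 : R := Prb PO (fun w => @dec2 _ _ _ s (rvX4 w) (rvX6 w) != rvW2 w).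

Definition leak (e : nat) : R :=
  match e with
  | 1 => mutinf PO rvW12 rvX1
  | 2 => mutinf PO rvW12 rvX2
  | 3 => mutinf PO rvW12 rvX3
  | 4 => mutinf PO rvW12 rvX4
  | 5 => mutinf PO rvW12 rvX5
  | 6 => mutinf PO rvW12 rvX6
  | 7 => mutinf PO rvW12 rvX7
  | _ => 0
  end.
End SchemeDefs.

Definition edge_len (R : realType) (C : nat -> R) (n : nat) : nat -> nat :=
  fun e => Num.truncn (n%:R * C e).

(* (R1,R2) securely achievable: there are codes for an increasing sequence of
   block lengths n_j, with message entropies (q-ary) at least n_j R_i, decoding
   errors -> 0, and leakage on every single edge -> 0 (strong secrecy). *)
Definition sec_achievable (R : realType) (F : finFieldType) (C : nat -> R)
    (R1 R2 : R) : Prop :=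
  exists (nb : nat -> nat) (s : forall j, scheme R F (edge_len C (nb j))),
    (forall j, (nb j < nb j.+1)%N) /\
    (forall j, (0 < #|Wset1 (s j)|)%N /\ (0 < #|Wset2 (s j)|)%N) /\
    (forall j, (nb j)%:R * R1 * ln (#|F|%:R) <= ln (#|Wset1 (s j)|%:R)) /\
    (forall j, (nb j)%:R * R2 * ln (#|F|%:R) <= ln (#|Wset2 (s j)|%:R)) /\
    (fun j => Perr1 (s j)) @ \oo --> (0 : R) /\
    (fun j => Perr2 (s j)) @ \oo --> (0 : R) /\
    (forall e, (1 <= e <= 7)%N -> (fun j => leak (s j) e) @ \oo --> (0 : R)).

(* Main.v *)
Require Import Defs.
From HB Require Import structures.
From mathcomp Require Import all_boot all_order all_algebra.
From mathcomp Require Import all_classical all_reals all_analysis.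
From mathcomp Require Import ring lra.
Import Order.TTheory GRing.Theory Num.Theory.
Import numFieldNormedType.Exports.
Local Open Scope classical_set_scope.
Local Open Scope ring_scope.


Section Core.
Variable R : realType.

Lemma ln_le_sub1 {y : R} : 0 < y -> ln y <= y - 1.
Proof.
move=> y0; have := expR_ge1Dx (ln y); rewrite lnK ?posrE //; lra.
Qed.

Lemma plnK {p q K : R} : 0 < p -> 0 < q -> 0 < K ->
  p * (ln K + 1) - q * K <= p * ln (p / q).
Proof.
move=> p0 q0 K0.
have x0 : 0 < q * K / p by rewrite divr_gt0 // mulr_gt0.
have := ln_le_sub1 x0.
rewrite ln_div ?posrE ?mulr_gt0 // lnM ?posrE // ln_div ?posrE // => H.
have := ler_wpM2l (ltW p0) H.
have e : p * (q * K / p) = q * K by field; rewrite ?lt0r_neq0 //.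
move=> H2.
nra.
Qed.

Lemma ptw (p q K a : R) : 0 <= p -> 0 <= q -> (0 < p -> 0 < q) -> 0 < K ->
  0 <= a <= 1 ->
  a * p * (ln K + 1) - a * q * K - q <= (if p == 0 then 0 else p * ln (p / q)).
Proof.
move=> p0 q0 pq K0 /andP[a0 a1].
case: eqP => [->|/eqP pn0].
  have := mulr_ge0 (mulr_ge0 a0 q0) (ltW K0); rewrite !mulr0 mul0r; lra.
have pp : 0 < p by rewrite lt0r pn0.
have qp := pq pp.
have h1 := plnK pp qp K0.
have h0 := plnK pp qp ltr01; rewrite ln1 add0r mulr1 mulr1 in h0.
have H1 : 0 <= a * (p * ln (p / q) - (p * (ln K + 1) - q * K)).
  by apply: mulr_ge0; rewrite ?subr_ge0.
have H0 : 0 <= (1 - a) * (p * ln (p / q) - (p - q)).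
  by apply: mulr_ge0; rewrite subr_ge0.
nra.
Qed.

Lemma Prb_ge0 (Om : finType) (P : Om -> R) (A : pred Om) :
  (forall w, 0 <= P w) -> 0 <= Prb P A.
Proof. by move=> P0; apply: sumr_ge0 => w _. Qed.

Lemma Prb_sub (Om : finType) (P : Om -> R) (A B : pred Om) :
  (forall w, 0 <= P w) -> (forall w, A w -> B w) -> Prb P A <= Prb P B.
Proof.
move=> P0 AB; rewrite /Prb (big_mkcond A) (big_mkcond B) /=.
apply: ler_sum => w _; case Aw: (A w); first by rewrite (AB _ Aw).
by case: (B w).
Qed.

Lemma sum_Prb (Om B : finType) (P : Om -> R) (g : Om -> B) :
  \sum_b Prb P (fun w => g w == b) = \sum_w P w.
Proof.
rewrite /Prb.
under eq_bigr do rewrite big_mkcond /=.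
rewrite exchange_big /=; apply: eq_bigr => w _.
rewrite (bigD1 (g w)) //= eqxx big1 ?addr0 // => b /negbTE; rewrite eq_sym => ->.
by [].
Qed.

Lemma collapse (Om A B : finType) (P : Om -> R) (f : Om -> A) (g : Om -> B)
  (h : A -> B -> R) :
  \sum_a \sum_b Prb P (fun w => (f w == a) && (g w == b)) * h a b
  = \sum_w P w * h (f w) (g w).
Proof.
rewrite /Prb.
under eq_bigr do under eq_bigr do rewrite big_mkcond big_distrl /=.
under eq_bigr do rewrite exchange_big /=.
rewrite exchange_big /=; apply: eq_bigr => w _.
rewrite (bigD1 (f w)) //= [X in _ + X = _]big1 ?addr0; last first.
  move=> a /negbTE; rewrite eq_sym => fa; apply: big1 => b _.
  by rewrite fa /= mul0r.
rewrite (bigD1 (g w)) //= !eqxx [X in _ + X = _]big1 ?addr0 //.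
by move=> b /negbTE; rewrite eq_sym => ->; rewrite andbF mul0r.
Qed.

Lemma core (Om A B : finType) (P : Om -> R) (f : Om -> A) (g : Om -> B)
  (al : A -> B -> R) (M kap mu e : R) :
  (forall w, 0 <= P w) -> \sum_w P w = 1 ->
  (forall a b, 0 <= al a b <= 1) ->
  1 - e <= \sum_w P w * al (f w) (g w) ->
  (forall a, Prb P (fun w => f w == a) <= kap) ->
  (forall b, \sum_a al a b <= mu) -> 0 <= kap -> kap * mu * M <= 1 -> 1 <= M ->
  (1 - e) * ln M - 2 <= mutinf P f g.
Proof.
move=> P0 P1 al01 hS hk hmu k0 kmM M1.
have M0 : 0 < M by apply: lt_le_trans M1.
have L0 : 0 <= ln M by apply: ln_ge0.
pose pa a := Prb P (fun w => f w == a).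
pose pb b := Prb P (fun w => g w == b).
pose pab a b := Prb P (fun w => (f w == a) && (g w == b)).
have step : \sum_a \sum_b (al a b * pab a b * (ln M + 1) - al a b * (pa a * pb b) * M
     - pa a * pb b) <= mutinf P f g.
  rewrite /mutinf; apply: ler_sum => a _; apply: ler_sum => b _.
  apply: ptw => //.
  - exact: Prb_ge0.
  - by apply: mulr_ge0; apply: Prb_ge0.
  - move=> pp; apply: mulr_gt0.
      apply: lt_le_trans pp _; apply: Prb_sub => // w /andP[] //.
    apply: lt_le_trans pp _; apply: Prb_sub => // w /andP[] //.
have h1 : \sum_a \sum_b al a b * pab a b * (ln M + 1) =
    (\sum_w P w * al (f w) (g w)) * (ln M + 1).
  rewrite -collapse mulr_suml; apply: eq_bigr => a _.
  rewrite mulr_suml; apply: eq_bigr => b _; rewrite /pab; ring.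
have hpb : \sum_b pb b = 1 by rewrite /pb sum_Prb.
have hpa : \sum_a pa a = 1 by rewrite /pa sum_Prb.
have h3 : \sum_a \sum_b pa a * pb b = 1.
  under eq_bigr do rewrite -mulr_sumr hpb mulr1.
  exact: hpa.
have h2 : \sum_a \sum_b al a b * (pa a * pb b) * M <= kap * mu * M.
  rewrite exchange_big /=.
  apply: (@le_trans _ _ (\sum_b pb b * (kap * mu * M))); last first.
    by rewrite -mulr_suml hpb mul1r.
  apply: ler_sum => b _.
  rewrite (eq_bigr (fun a => al a b * pa a * (pb b * M))); last first.
    by move=> a _; ring.
  rewrite -mulr_suml.
  have pb0 : 0 <= pb b by apply: Prb_ge0.
  have : \sum_a al a b * pa a <= kap * mu.
    apply: (@le_trans _ _ (\sum_a al a b * kap)).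
      apply: ler_sum => a _; apply: ler_wpM2l; first by case/andP: (al01 a b).
      exact: hk.
    rewrite -mulr_suml mulrC; apply: ler_wpM2l => //.
  move=> H; have := ler_wpM2r (mulr_ge0 pb0 (ltW M0)) H; nra.
move: step; rewrite (eq_bigr (fun a => \sum_b al a b * pab a b * (ln M + 1)
   - \sum_b al a b * (pa a * pb b) * M - \sum_b pa a * pb b)); last first.
  by move=> a _; rewrite !sumrB.
rewrite !sumrB h1 h3.
set S := \sum_w _.
have S0 : 0 <= S by apply: sumr_ge0 => w _; apply: mulr_ge0 => //; case/andP: (al01 (f w) (g w)).
have := ler_wpM2r L0 hS.
move=> HH st; rewrite -/S in HH; nra.
Qed.
End Core.


Section Gen.
Variable R : realType.
Lemma sum2 (X T : finType) (F : X * T -> R) :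
  \sum_w F w = \sum_x \sum_t F (x, t).
Proof. by rewrite pair_bigA; apply: eq_bigr; case. Qed.

Lemma sum_ind (X : finType) (y : X) : \sum_x ((y == x)%:R : R) = 1.
Proof.
rewrite (bigD1 y) //= eqxx big1 ?addr0 // => x /negbTE; rewrite eq_sym => ->.
by [].
Qed.

Lemma avg1 (X T : finType) (Q : X -> R) (p : T -> R) (G : X -> T -> R) :
  \sum_t p t = 1 ->
  \sum_(w : X * T) Q w.1 * p w.2 * (\sum_t p t * G w.1 t)
  = \sum_(w : X * T) Q w.1 * p w.2 * G w.1 w.2.
Proof.
move=> p1; rewrite !sum2 /=; apply: eq_bigr => x _.
rewrite -big_distrl /= -big_distrr /= p1 mulr1.
rewrite big_distrr /=; apply: eq_bigr => t _; ring.
Qed.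

Lemma avg2 (X T U : finType) (Q : X -> R) (p : T -> R) (r : U -> R)
  (H : X -> U -> T -> R) :
  \sum_t p t = 1 ->
  \sum_(w : (X * T) * U) Q w.1.1 * p w.1.2 * r w.2 * (\sum_t p t * H w.1.1 w.2 t)
  = \sum_(w : (X * T) * U) Q w.1.1 * p w.1.2 * r w.2 * H w.1.1 w.2 w.1.2.
Proof.
move=> p1; rewrite !sum2 /=.
apply: eq_bigr => x _; rewrite [LHS]exchange_big [RHS]exchange_big /=.
apply: eq_bigr => u _.
rewrite (eq_bigr (fun t => p t * (Q x * r u * (\sum_t0 p t0 * H x u t0)))); last first.
  by move=> t _; ring.
rewrite -big_distrl /= p1 mul1r big_distrr /=; apply: eq_bigr => t _; ring.
Qed.

Lemma split_succ (Om : finType) (P : Om -> R) (A : pred Om) :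
  \sum_w P w * (A w)%:R + Prb P (fun w => ~~ A w) = \sum_w P w.
Proof.
rewrite [RHS](bigID A) /=; congr (_ + _).
rewrite [RHS]big_mkcond /=; apply: eq_bigr => w _; case: (A w) => /=.
  by rewrite mulr1. by rewrite mulr0.
Qed.
End Gen.


Section Sch.
Variables (R : realType) (F : finFieldType) (k : nat -> nat) (s : scheme R F k).
Hypotheses (W1n : (0 < #|Wset1 s|)%N) (W2n : (0 < #|Wset2 s|)%N).

Lemma PO_ge0 w : 0 <= PO (s:=s) w.
Proof.
rewrite /PO; apply: mulr_ge0; last exact: p2_ge0.
apply: mulr_ge0; last exact: p1_ge0.
by apply: mulr_ge0; rewrite invr_ge0 ler0n.
Qed.

Lemma cst_sum (T : finType) (c : R) : \sum_(t : T) c = c * #|T|%:R.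
Proof. by rewrite sumr_const mulr_natr. Qed.

Lemma PO_sum : \sum_w PO (s:=s) w = 1.
Proof.
rewrite /Omega sum2 sum2 /PO /=.
under eq_bigr do under eq_bigr do rewrite -big_distrr /= p2_sum mulr1.
under eq_bigr do rewrite -big_distrr /= p1_sum mulr1.
rewrite sum2 /=.
under eq_bigr do rewrite cst_sum.
rewrite -big_distrl /= cst_sum.
have h1 : (#|Wset1 s|%:R : R) != 0 by rewrite pnatr_eq0 -lt0n.
have h2 : (#|Wset2 s|%:R : R) != 0 by rewrite pnatr_eq0 -lt0n.
field; exact/andP.
Qed.

Lemma pa_eq a : Prb (PO (s:=s)) (fun w => rvW12 w == a)
  = #|Wset1 s|%:R^-1 * #|Wset2 s|%:R^-1.
Proof.
rewrite /Prb big_mkcond /Omega sum2 sum2 /=.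
rewrite (bigD1 a) //= [X in _ + X]big1 ?addr0; last first.
  move=> b /negbTE ba; apply: big1 => t _; apply: big1 => u _.
  by rewrite /rvW12 /= ba.
rewrite /rvW12 /= eqxx /PO /=.
under eq_bigr do rewrite -big_distrr /= p2_sum mulr1.
by rewrite -big_distrr /= p1_sum mulr1.
Qed.

Definition al1 (a : Wset1 s * Wset2 s) (b : (k 1%N).-tuple F) : R :=
  \sum_t p2 t * ((@dec1 _ _ _ s (enc5 a.2 t)
     (@enc7 _ _ _ s (@enc3 _ _ _ s b (enc2 a.2 t)))) == a.1)%:R.

Definition al2 (a : Wset1 s * Wset2 s) (b : (k 2%N).-tuple F) : R :=
  \sum_t p1 t * ((@dec2 _ _ _ s (enc4 a.1 t)
     (@enc6 _ _ _ s (@enc3 _ _ _ s (enc1 a.1 t) b))) == a.2)%:R.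

Lemma wsum01 (T : finType) (p : T -> R) (c : T -> bool) :
  (forall t, 0 <= p t) -> \sum_t p t = 1 ->
  0 <= \sum_t p t * (c t)%:R <= 1.
Proof.
move=> p0 p1; apply/andP; split.
  by apply: sumr_ge0 => t _; apply: mulr_ge0.
rewrite -[X in _ <= X]p1; apply: ler_sum => t _; case: (c t) => /=.
  by rewrite mulr1. by rewrite mulr0.
Qed.

Lemma al1_01 a b : 0 <= al1 a b <= 1.
Proof. exact: wsum01 (@p2_ge0 _ _ _ s) (p2_sum s). Qed.

Lemma al2_01 a b : 0 <= al2 a b <= 1.
Proof. exact: wsum01 (@p1_ge0 _ _ _ s) (p1_sum s). Qed.

Lemma al1_sum b : \sum_a al1 a b = #|Wset2 s|%:R.
Proof.
rewrite sum2 /= exchange_big /= -[RHS]mul1r -cst_sum; apply: eq_bigr => w2 _.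
rewrite /al1 /= exchange_big /= -[RHS](p2_sum s); apply: eq_bigr => t _.
by rewrite -big_distrr /= sum_ind mulr1.
Qed.

Lemma al2_sum b : \sum_a al2 a b = #|Wset1 s|%:R.
Proof.
rewrite sum2 /= -[RHS]mul1r -cst_sum; apply: eq_bigr => w1 _.
rewrite /al2 /= exchange_big /= -[RHS](p1_sum s); apply: eq_bigr => t _.
by rewrite -big_distrr /= sum_ind mulr1.
Qed.

Lemma H1 : 1 - Perr1 s <= \sum_w PO w * al1 (rvW12 w) (rvX1 (s:=s) w).
Proof.
have -> : \sum_w PO w * al1 (rvW12 w) (rvX1 (s:=s) w) =
   \sum_w PO w * ((@dec1 _ _ _ s (rvX5 w) (rvX7 w)) == rvW1 w)%:R.
  have E := (@avg1 _ _ _ (fun x : (Wset1 s * Wset2 s * Th1 s) =>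
     #|Wset1 s|%:R^-1 * #|Wset2 s|%:R^-1 * p1 x.2) (@p2 _ _ _ s)
     (fun x t => ((@dec1 _ _ _ s (enc5 x.1.2 t) (@enc7 _ _ _ s
        (@enc3 _ _ _ s (enc1 x.1.1 x.2) (enc2 x.1.2 t)))) == x.1.1)%:R)
     (p2_sum s)). exact E.
have := @split_succ _ _ (PO (s:=s)) (fun w => (@dec1 _ _ _ s (rvX5 w) (rvX7 w)) == rvW1 w).
rewrite PO_sum /Perr1 /= => h.
lra.
Qed.

Lemma H2 : 1 - Perr2 s <= \sum_w PO w * al2 (rvW12 w) (rvX2 (s:=s) w).
Proof.
have -> : \sum_w PO w * al2 (rvW12 w) (rvX2 (s:=s) w) =
   \sum_w PO w * ((@dec2 _ _ _ s (rvX4 w) (rvX6 w)) == rvW2 w)%:R.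
  exact: (@avg2 _ _ _ _ (fun x : (Wset1 s * Wset2 s) =>
     #|Wset1 s|%:R^-1 * #|Wset2 s|%:R^-1) (@p1 _ _ _ s) (@p2 _ _ _ s)
     (fun x u t => ((@dec2 _ _ _ s (enc4 x.1 t) (@enc6 _ _ _ s
        (@enc3 _ _ _ s (enc1 x.1 t) (enc2 x.2 u)))) == x.2)%:R)
     (p1_sum s)).
have := @split_succ _ _ (PO (s:=s)) (fun w => (@dec2 _ _ _ s (rvX4 w) (rvX6 w)) == rvW2 w).
rewrite PO_sum /Perr2 /= => h.
lra.
Qed.
End Sch.

Section B.
Variables (R : realType) (F : finFieldType) (k : nat -> nat) (s : scheme R F k).
Hypotheses (W1n : (0 < #|Wset1 s|)%N) (W2n : (0 < #|Wset2 s|)%N).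

Lemma bound1 : (1 - Perr1 s) * ln (#|Wset1 s|%:R) - 2 <= leak s 1.
Proof.
have h1 : (#|Wset1 s|%:R : R) != 0 by rewrite pnatr_eq0 -lt0n.
have h2 : (#|Wset2 s|%:R : R) != 0 by rewrite pnatr_eq0 -lt0n.
apply: (@core R _ _ _ _ _ _ (@al1 _ _ _ s) _ (#|Wset1 s|%:R^-1 * #|Wset2 s|%:R^-1)
   (#|Wset2 s|%:R)).
- exact: PO_ge0.
- exact: PO_sum.
- exact: al1_01.
- exact: H1.
- by move=> a; rewrite pa_eq.
- by move=> b; rewrite al1_sum.
- by apply: mulr_ge0; rewrite invr_ge0 ler0n.
- by rewrite le_eqVlt; apply/orP; left; apply/eqP; field; apply/andP.
- by rewrite ler1n.
Qed.

Lemma bound2 : (1 - Perr2 s) * ln (#|Wset2 s|%:R) - 2 <= leak s 2.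
Proof.
have h1 : (#|Wset1 s|%:R : R) != 0 by rewrite pnatr_eq0 -lt0n.
have h2 : (#|Wset2 s|%:R : R) != 0 by rewrite pnatr_eq0 -lt0n.
apply: (@core R _ _ _ _ _ _ (@al2 _ _ _ s) _ (#|Wset1 s|%:R^-1 * #|Wset2 s|%:R^-1)
   (#|Wset1 s|%:R)).
- exact: PO_ge0.
- exact: PO_sum.
- exact: al2_01.
- exact: H2.
- by move=> a; rewrite pa_eq.
- by move=> b; rewrite al2_sum.
- by apply: mulr_ge0; rewrite invr_ge0 ler0n.
- by rewrite le_eqVlt; apply/orP; left; apply/eqP; field; apply/andP.
- by rewrite ler1n.
Qed.
End B.


Lemma rate0 (R : realType) (nb : nat -> nat) (hnb : forall j, (nb j < nb j.+1)%N)
  (Lm lk pe : nat -> R) (Rr c : R) (c0 : 0 < c) (hR : 0 <= Rr)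
  (hL : forall j, (nb j)%:R * Rr * c <= Lm j) (hL0 : forall j, 0 <= Lm j)
  (hb : forall j, (1 - pe j) * Lm j - 2 <= lk j)
  (clk : lk @ \oo --> (0 : R)) (cpe : pe @ \oo --> (0 : R)) : Rr = 0.
Proof.
have nbj : forall j, (j <= nb j)%N.
  elim=> // j IH; exact: leq_ltn_trans IH (hnb j).
have ev1 := cvgr_le _ clk 1 ltr01.
have h12 : (0:R) < 1/2 by rewrite divr_gt0.
have ev2 := cvgr_le _ cpe (1/2) h12.
case: ev1 => N1 _ HN1.
case: ev2 => N2 _ HN2.
have bnd : forall j, (maxn N1 N2 <= j)%N -> Lm j <= 6.
  move=> j; rewrite geq_max => /andP[j1 j2].
  have a1 : lk j <= 1 by apply: HN1.
  have a2 : pe j <= 1/2 by apply: HN2.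
  have := hb j; have := hL0 j; nra.
case: (eqVneq Rr 0) => // Rn0.
have Rp : 0 < Rr by rewrite lt0r Rn0.
have Rc : 0 < Rr * c by rewrite mulr_gt0.
pose x := 6 / (Rr * c).
pose j := maxn (maxn N1 N2) (Num.truncn x).+1.
have hj1 : (maxn N1 N2 <= j)%N by rewrite leq_maxl.
have hj2 : x < j%:R.
  apply: lt_le_trans (truncnS_gt x) _; rewrite ler_nat leq_maxr //.
have := bnd j hj1.
have := hL j.
have : (j%:R : R) <= (nb j)%:R by rewrite ler_nat.
have : x * (Rr * c) = 6 by rewrite /x mulrVK ?unitfE ?lt0r_neq0.
have := ltr_pM2r Rc; move=> E; have := hj2; rewrite -E => H.
nra.
Qed.

Lemma unit_sum1 (R : realType) : \sum_(t : unit) (1 : R) = 1.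
Proof. by rewrite cst_sum card_unit mul1r. Qed.

Lemma ler01' (R : realType) (t : unit) : (0 : R) <= (fun _ => 1) t.
Proof. exact: ler01. Qed.

Definition tscheme (R : realType) (F : finFieldType) (k : nat -> nat) : scheme R F k :=
  @Scheme R F k unit unit unit unit (fun _ => 1) (fun _ => 1)
    (@ler01' R) (unit_sum1 R) (@ler01' R) (unit_sum1 R)
    (fun _ _ => nseq_tuple _ 0) (fun _ _ => nseq_tuple _ 0)
    (fun _ _ => nseq_tuple _ 0) (fun _ _ => nseq_tuple _ 0)
    (fun _ _ => nseq_tuple _ 0) (fun _ => nseq_tuple _ 0) (fun _ => nseq_tuple _ 0)
    (fun _ _ => tt) (fun _ _ => tt).

Lemma mutinf_cst (R : realType) (Om A B : finType) (P : Om -> R) (f : Om -> A)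
  (g : Om -> B) (a0 : A) : (forall w, f w = a0) -> \sum_w P w = 1 ->
  mutinf P f g = 0.
Proof.
move=> hf P1; rewrite /mutinf; apply: big1 => a _; apply: big1 => b _ /=.
case: eqP => // /eqP pab0.
have fa : a = a0.
  apply/eqP; apply: contraNT pab0 => aa0; apply/eqP; rewrite /Prb big_pred0 //.
  by move=> w; rewrite hf eq_sym (negbTE aa0).
subst a.
have e1 : Prb P (fun w => f w == a0) = 1.
  by rewrite -P1 /Prb; apply: eq_bigl => w; rewrite hf eqxx.
have e2 : Prb P (fun w => (f w == a0) && (g w == b)) = Prb P (fun w => g w == b).
  by rewrite /Prb; apply: eq_bigl => w; rewrite hf eqxx.
by rewrite e1 e2 mul1r divff -?e2 // ln1 mulr0.
Qed.

Lemma cvg0_of (R : realType) (u : nat -> R) : (forall j, u j = 0) -> u @ \oo --> (0 : R).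
Proof. move=> h; have -> : u = fun _ => 0 by apply: funext. exact: cvg_cst. Qed.

Lemma tleak (R : realType) (F : finFieldType) (k : nat -> nat) e :
  leak (tscheme R F k) e = 0.
Proof.
have P1 := @PO_sum R F k (tscheme R F k) (ltac:(by rewrite card_unit)) (ltac:(by rewrite card_unit)).
have hf : forall w : Omega (tscheme R F k), rvW12 w = (tt, tt).
  by case=> [[[[] []] []] []].
by case: e => [|[|[|[|[|[|[|[|e]]]]]]]] //=; exact: (@mutinf_cst _ _ _ _ _ _ _ _ hf P1).
Qed.

Lemma tperr1 (R : realType) (F : finFieldType) (k : nat -> nat) :
  Perr1 (tscheme R F k) = 0.
Proof. by rewrite /Perr1 /Prb big_pred0 // => -[[[[] []] []] []]. Qed.
Lemma tperr2 (R : realType) (F : finFieldType) (k : nat -> nat) :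
  Perr2 (tscheme R F k) = 0.
Proof. by rewrite /Perr2 /Prb big_pred0 // => -[[[[] []] []] []]. Qed.

Theorem theorem2 (R : realType) (F : finFieldType) (C : nat -> R)
    (hC : forall e, (1 <= e <= 7)%N -> 0 <= C e)
    (R1 R2 : R) (hR1 : 0 <= R1) (hR2 : 0 <= R2) :
  sec_achievable F C R1 R2 <-> (R1 = 0 /\ R2 = 0).
Proof.
split.
- case=> nb [s [hnb [hc [h1 [h2 [cp1 [cp2 cl]]]]]]].
  have Fc : 0 < ln (#|F|%:R : R) by apply: ln_gt0; rewrite ltr1n card_finNzRing_gt1.
  split.
  + apply: (@rate0 R nb hnb (fun j => ln (#|Wset1 (s j)|%:R))
      (fun j => leak (s j) 1) (fun j => Perr1 (s j)) _ _ Fc hR1 h1).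
    * by move=> j; apply: ln_ge0; rewrite ler1n; case: (hc j).
    * by move=> j; case: (hc j) => a b; exact: bound1.
    * exact: cl.
    * exact: cp1.
  + apply: (@rate0 R nb hnb (fun j => ln (#|Wset2 (s j)|%:R))
      (fun j => leak (s j) 2) (fun j => Perr2 (s j)) _ _ Fc hR2 h2).
    * by move=> j; apply: ln_ge0; rewrite ler1n; case: (hc j).
    * by move=> j; case: (hc j) => a b; exact: bound2.
    * exact: cl.
    * exact: cp2.
- case=> -> ->.
  exists (fun j => j), (fun j => tscheme R F (edge_len C j)).
  split; first by [].
  split; first by move=> j; rewrite card_unit.
  split; first by move=> j; rewrite mulr0 mul0r card_unit ln1.
  split; first by move=> j; rewrite mulr0 mul0r card_unit ln1.
  split; first by apply: cvg0_of => j; rewrite tperr1.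
  split; first by apply: cvg0_of => j; rewrite tperr2.
  by move=> e _; apply: cvg0_of => j; rewrite tleak.
Qed.
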